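(* For every $n\ge1$, the set of transitive integer relations on $[n]$, ordered by the weak order on integer relations, is a lattice (though not a sublattice of the weak order on all integer relations), and the set of integer posets on $[n]$ (antisymmetric transitive integer relations) is a sublattice of this lattice of transitive integer relations.
   Context: An integer relation of size $n$ is a reflexive binary relation $R$ on $[n]=\{1,\dots,n\}$. Its increasing part is $\mathrm{Inc}(R)=\{(a,b)\in R: a<b\}$ and its decreasing part is $\mathrm{Dec}(R)=\{(b,a)\in R: a<b\}$. The weak order on integer relations: $R\le S$ iff $\mathrm{Inc}(S)\subseteq\mathrm{Inc}(R)$ and $\mathrm{Dec}(R)\subseteq\mathrm{Dec}(S)$. An integer poset is an integer relation that is antisymmetric and transitive. *)

(* Defs.v *)
(* Integer relations on [n] are modelled on 'I_n = {0,..,n-1}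
   (an order-preserving relabelling of {1,..,n}); a relation is a finite set
   of pairs, so equality of relations is extensional. *)
From mathcomp Require Import all_boot.
Set Implicit Arguments. Unset Strict Implicit. Unset Printing Implicit Defensive.

Definition relation (n : nat) := {set 'I_n * 'I_n}.

Definition is_int_rel n (R : relation n) : Prop := forall i : 'I_n, (i, i) \in R.

Definition weak_le n (R S : relation n) : Prop :=
  (forall a b : 'I_n, a < b -> (a, b) \in S -> (a, b) \in R) /\
  (forall a b : 'I_n, a < b -> (b, a) \in R -> (b, a) \in S).

Definition is_transitive_rel n (R : relation n) : Prop :=
  forall a b c : 'I_n, (a, b) \in R -> (b, c) \in R -> (a, c) \in R.

Definition is_antisymmetric_rel n (R : relation n) : Prop :=
  forall a b : 'I_n, (a, b) \in R -> (b, a) \in R -> a = b.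

Definition trans_int_rel n (R : relation n) : Prop :=
  is_int_rel R /\ is_transitive_rel R.

Definition int_poset n (R : relation n) : Prop :=
  is_int_rel R /\ is_antisymmetric_rel R /\ is_transitive_rel R.

Definition is_join n (P : relation n -> Prop) (R S J : relation n) : Prop :=
  P J /\ weak_le R J /\ weak_le S J /\
  (forall U, P U -> weak_le R U -> weak_le S U -> weak_le J U).

Definition is_meet n (P : relation n -> Prop) (R S M : relation n) : Prop :=
  P M /\ weak_le M R /\ weak_le M S /\
  (forall U, P U -> weak_le U R -> weak_le U S -> weak_le U M).

Definition is_lattice n (P : relation n -> Prop) : Prop :=
  forall R S, P R -> P S ->
    (exists J, is_join P R S J) /\ (exists M, is_meet P R S M).

Definition is_sublattice n (P Q : relation n -> Prop) : Prop :=
  (forall R, P R -> Q R) /\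
  (forall R S, P R -> P S ->
     (forall J, is_join Q R S J -> P J) /\ (forall M, is_meet Q R S M -> P M)).

(* Main.v *)
Require Import Defs.
From mathcomp Require Import all_boot.
From mathcomp Require Import zify.
Set Implicit Arguments. Unset Strict Implicit. Unset Printing Implicit Defensive.

Lemma conn_ind1 (T : finType) (e : rel T) (P : T -> T -> Prop) :
  (forall x, P x x) -> (forall x y z, e x y -> connect e y z -> P y z -> P x z) ->
  forall x z, connect e x z -> P x z.
Proof.
move=> H0 H1 x z /connectP [s]; elim: s x => [|y s IH] x /=; first by move=> _ ->.
case/andP => exy pth Hz; apply: H1 exy _ (IH y pth Hz).
by apply/connectP; exists s.
Qed.

Lemma conn_indn (T : finType) (e : rel T) (P : T -> T -> Prop) :
  (forall x, P x x) -> (forall x y z, connect e x y -> e y z -> P x y -> P x z) ->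
  forall x z, connect e x z -> P x z.
Proof.
move=> H0 H1 x z /connectP [s]; elim/last_ind: s z => [|s y IH] z /=; first by move=> _ ->.
rewrite rcons_path last_rcons => /andP [pth ey] ->.
apply: H1 ey (IH _ pth erefl); by apply/connectP; exists s.
Qed.

Definition edge n (R S : relation n) : rel 'I_n :=
  fun x y => (x < y) && (((x, y) \in R) || ((x, y) \in S)).
Definition Cc n (R S : relation n) := connect (edge R S).
Definition Kk n (R S : relation n) (p q : 'I_n) : bool :=
  [forall x, forall y, Cc R S x p ==> Cc R S q y ==> (y < x) ==>
     (((x, y) \in R) && ((x, y) \in S))].
Definition Mt n (R S : relation n) : relation n :=
  [set pq | Cc R S pq.1 pq.2 || ((pq.2 < pq.1) && Kk R S pq.1 pq.2)].

Lemma KP n (R S : relation n) p q : Kk R S p q ->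
  forall x y, Cc R S x p -> Cc R S q y -> y < x -> ((x, y) \in R) /\ ((x, y) \in S).
Proof.
move=> /forallP H x y Hx Hy Hxy; move: (H x) => /forallP /(_ y).
by rewrite Hx Hy Hxy /= => /andP.
Qed.

Lemma KI n (R S : relation n) p q :
  (forall x y, Cc R S x p -> Cc R S q y -> y < x -> ((x, y) \in R) /\ ((x, y) \in S)) ->
  Kk R S p q.
Proof.
move=> H; apply/forallP => x; apply/forallP => y.
apply/implyP => Hx; apply/implyP => Hy; apply/implyP => Hxy.
by case: (H x y Hx Hy Hxy) => -> ->.
Qed.

Lemma C_le n (R S : relation n) x y : Cc R S x y -> x <= y.
Proof.
move: x y; apply: conn_ind1 => // x y z /andP [h _] _ h2.
exact: leq_trans (ltnW h) h2.
Qed.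

Lemma MtE n (R S : relation n) p q :
  ((p, q) \in Mt R S) = Cc R S p q || ((q < p) && Kk R S p q).
Proof. by rewrite inE. Qed.

Lemma Kmono n (R S : relation n) p p' q q' :
  Cc R S p' p -> Cc R S q q' -> Kk R S p q -> Kk R S p' q'.
Proof.
move=> h1 h2 /KP H; apply: KI => x y hx hy hxy.
apply: H hxy; [exact: connect_trans hx h1 | exact: connect_trans h2 hy].
Qed.

Lemma lemA n (R S : relation n) : is_transitive_rel R -> is_transitive_rel S ->
  forall p q r, Cc R S p q -> Kk R S q r -> r < q -> p <= r -> Cc R S p r.
Proof.
move=> tR tS p q r H; move: p q H r.
apply: (conn_ind1 (P := fun x z => forall r, Kk R S z r -> r < z -> x <= r -> Cc R S x r)).
  by move=> x r _ h1 h2; have := leq_ltn_trans h2 h1; rewrite ltnn.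
move=> x y z exy Cyz IH r Kzr rz xr.
case: (leqP y r) => yr.
  by apply: connect_trans (connect1 exy) (IH r Kzr rz yr).
case: (ltngtP x r) xr => // [xr' | /val_inj ->] _; last exact: connect0.
have [hR hS] := KP Kzr Cyz (connect0 _ r) yr.
case/andP: exy => xy /orP [h | h]; apply: connect1; rewrite /edge xr' /=.
  by rewrite (tR _ _ _ h hR).
by rewrite (tS _ _ _ h hS) orbT.
Qed.

Lemma lemB n (R S : relation n) : is_transitive_rel R -> is_transitive_rel S ->
  forall p q r, Kk R S p q -> q < p -> Cc R S q r -> p <= r -> Cc R S p r.
Proof.
move=> tR tS p q r K qp H; move: q r H K qp.
apply: (conn_indn (P := fun x z => Kk R S p x -> x < p -> p <= z -> Cc R S p z)).
  by move=> x _ h1 h2; have := leq_ltn_trans h2 h1; rewrite ltnn.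
move=> x y z Cxy eyz IH Kpx xp pz.
case: (leqP p y) => py.
  by apply: connect_trans (IH Kpx xp py) (connect1 eyz).
case: (ltngtP p z) pz => // [pz' | /val_inj ->] _; last exact: connect0.
have [hR hS] := KP Kpx (connect0 _ p) Cxy py.
case/andP: eyz => yz /orP [h | h]; apply: connect1; rewrite /edge pz' /=.
  by rewrite (tR _ _ _ hR h).
by rewrite (tS _ _ _ hS h) orbT.
Qed.

Lemma Mt_trans n (R S : relation n) : is_transitive_rel R -> is_transitive_rel S ->
  is_transitive_rel (Mt R S).
Proof.
move=> tR tS p q r; rewrite !MtE.
case/orP => [Cpq | /andP [qp Kpq]]; case/orP => [Cqr | /andP [rq Kqr]].
- by apply/orP; left; apply: connect_trans Cpq Cqr.
- have Kpr : Kk R S p r by apply: Kmono Cpq (connect0 _ _) Kqr.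
  case: (ltnP r p) => rp; first by rewrite Kpr orbT.
  by rewrite (lemA tR tS Cpq Kqr rq rp).
- have Kpr : Kk R S p r by apply: Kmono (connect0 _ _) Cqr Kpq.
  case: (ltnP r p) => rp; first by rewrite Kpr orbT.
  by rewrite (lemB tR tS Kpq qp Cqr rp).
- apply/orP; right; rewrite (ltn_trans rq qp) /=.
  apply: KI => x y Cxp Cry yx.
  case: (leqP q y) => qy.
    exact: KP Kpq x y Cxp (lemB tR tS Kqr rq Cry qy) yx.
  case: (leqP x q) => xq.
    exact: KP Kqr x y (lemA tR tS Cxp Kpq qp xq) Cry yx.
  have [h1 h2] := KP Kpq Cxp (connect0 _ q) xq.
  have [h3 h4] := KP Kqr (connect0 _ q) Cry qy.
  by split; [apply: tR h1 h3 | apply: tS h2 h4].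
Qed.

Lemma C_U n (R S U : relation n) : is_int_rel U -> is_transitive_rel U ->
  weak_le U R -> weak_le U S -> forall x y, Cc R S x y -> (x, y) \in U.
Proof.
move=> iU tU [hR _] [hS _].
apply: conn_ind1 => // x y z /andP [xy /orP [h | h]] _ hy.
  by apply: tU (hR _ _ xy h) hy.
by apply: tU (hS _ _ xy h) hy.
Qed.

Lemma Mt_meet n (R S : relation n) : trans_int_rel R -> trans_int_rel S ->
  is_meet (@trans_int_rel n) R S (Mt R S).
Proof.
move=> [iR tR] [iS tS]; split; [|split; [|split]].
- split; last exact: Mt_trans.
  by move=> i; rewrite MtE; apply/orP; left; apply: connect0.
- split => a b ab.
    by move=> h; rewrite MtE; apply/orP; left; apply: connect1; rewrite /edge ab h.
  rewrite MtE => /orP [/C_le | /andP [_ K]]; first by rewrite leqNgt ab.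
  by case: (KP K (connect0 _ b) (connect0 _ a) ab).
- split => a b ab.
    by move=> h; rewrite MtE; apply/orP; left; apply: connect1; rewrite /edge ab h orbT.
  rewrite MtE => /orP [/C_le | /andP [_ K]]; first by rewrite leqNgt ab.
  by case: (KP K (connect0 _ b) (connect0 _ a) ab).
- move=> U [iU tU] hUR hUS; split => a b ab.
    rewrite MtE => /orP [| /andP [ba _]]; first exact: C_U.
    by have := ltn_trans ab ba; rewrite ltnn.
  move=> h; rewrite MtE; apply/orP; right; rewrite ab /=.
  apply: KI => x y Cxb Cay yx.
  have hU : (x, y) \in U.
    by apply: tU (tU _ _ _ (C_U iU tU hUR hUS Cxb) h) (C_U iU tU hUR hUS Cay).
  by split; [apply: hUR.2 | apply: hUS.2].
Qed.

Lemma Mt_antisym n (R S : relation n) : is_antisymmetric_rel R ->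
  is_antisymmetric_rel S -> is_antisymmetric_rel (Mt R S).
Proof.
move=> aR aS.
have core : forall p q, Cc R S p q -> p < q -> Kk R S q p -> False.
  move=> p q /connectP [[|z s]] /=; first by move=> _ -> ; rewrite ltnn.
  case/andP => epz pth lq pq K.
  have Czq : Cc R S z q by apply/connectP; exists s.
  case/andP: epz => pz hpz.
  have [h1 h2] := KP K Czq (connect0 _ p) pz.
  have : p = z by case/orP: hpz => h; [apply: aR h h1 | apply: aS h h2].
  by move=> e; move: pz; rewrite e ltnn.
move=> p q; rewrite !MtE.
case/orP => [Cpq | /andP [qp Kpq]]; case/orP => [Cqp | /andP [pq Kqp]].
- by apply: val_inj; apply/eqP; rewrite eqn_leq (C_le Cpq) (C_le Cqp).
- by case: (core _ _ Cpq pq Kqp).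
- by case: (core _ _ Cqp qp Kpq).
- by have := ltn_trans pq qp; rewrite ltnn.
Qed.

Definition rv n (R : relation n) : relation n :=
  [set p | (rev_ord p.1, rev_ord p.2) \in R].

Lemma rvE n (R : relation n) a b : ((a, b) \in rv R) = ((rev_ord a, rev_ord b) \in R).
Proof. by rewrite inE. Qed.

Lemma rvK n (R : relation n) : rv (rv R) = R.
Proof. by apply/setP => -[a b]; rewrite !rvE !rev_ordK. Qed.

Lemma rev_lt n (a b : 'I_n) : (rev_ord a < rev_ord b) = (b < a).
Proof. have := ltn_ord a; have := ltn_ord b; rewrite /=; lia. Qed.

Lemma rv_le n (A B : relation n) : weak_le A B -> weak_le (rv B) (rv A).
Proof.
move=> [H1 H2]; split => a b ab; rewrite !rvE.
  by apply: H2; rewrite rev_lt.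
by apply: H1; rewrite rev_lt.
Qed.

Lemma rv_trans n (R : relation n) : trans_int_rel R -> trans_int_rel (rv R).
Proof.
move=> [iR tR]; split; first by move=> i; rewrite rvE.
by move=> a b c; rewrite !rvE; apply: tR.
Qed.

Lemma rv_antisym n (R : relation n) : is_antisymmetric_rel R -> is_antisymmetric_rel (rv R).
Proof.
move=> aR a b; rewrite !rvE => h1 h2.
by apply: (can_inj (@rev_ordK n)); apply: aR h1 h2.
Qed.

Lemma meet_join n (R S M : relation n) :
  is_meet (@trans_int_rel n) (rv R) (rv S) M -> is_join (@trans_int_rel n) R S (rv M).
Proof.
move=> [PM [h1 [h2 h3]]]; split; first exact: rv_trans.
split; first by rewrite -[R]rvK; apply: rv_le.
split; first by rewrite -[S]rvK; apply: rv_le.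
move=> U PU hR hS; rewrite -[U]rvK; apply: rv_le.
by apply: h3; [apply: rv_trans | apply: rv_le | apply: rv_le].
Qed.

Definition Jt n (R S : relation n) := rv (Mt (rv R) (rv S)).

Lemma Jt_join n (R S : relation n) : trans_int_rel R -> trans_int_rel S ->
  is_join (@trans_int_rel n) R S (Jt R S).
Proof. by move=> hR hS; apply: meet_join; apply: Mt_meet; apply: rv_trans. Qed.

Lemma weak_antisym n (A B : relation n) : is_int_rel A -> is_int_rel B ->
  weak_le A B -> weak_le B A -> A = B.
Proof.
move=> iA iB [h1 h2] [h3 h4]; apply/setP => -[a b].
case: (ltngtP a b) => ab.
- by apply/idP/idP => h; [apply: h3 | apply: h1].
- by apply/idP/idP => h; [apply: h2 | apply: h4].
- have -> : b = a by apply: val_inj.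
  by rewrite iA iB.
Qed.

Lemma meet_unique n (R S M M' : relation n) :
  is_meet (@trans_int_rel n) R S M -> is_meet (@trans_int_rel n) R S M' -> M = M'.
Proof.
move=> [PM [a1 [a2 a3]]] [PM' [b1 [b2 b3]]].
apply: weak_antisym; [exact: PM.1 | exact: PM'.1 | exact: b3 | exact: a3].
Qed.

Lemma join_unique n (R S M M' : relation n) :
  is_join (@trans_int_rel n) R S M -> is_join (@trans_int_rel n) R S M' -> M = M'.
Proof.
move=> [PM [a1 [a2 a3]]] [PM' [b1 [b2 b3]]].
apply: weak_antisym; [exact: PM.1 | exact: PM'.1 | exact: a3 | exact: b3].
Qed.

Definition dg n : relation n := [set p : 'I_n * 'I_n | p.1 == p.2].
Definition sg n (u v : 'I_n) : relation n := dg n :|: [set (u, v)].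

Lemma sgE n (u v a b : 'I_n) : ((a, b) \in sg u v) = (a == b) || ((a == u) && (b == v)).
Proof. by rewrite !inE xpair_eqE. Qed.

Lemma sg_trans n (u v : 'I_n) : u != v -> trans_int_rel (sg u v).
Proof.
move=> uv; split; first by move=> i; rewrite sgE eqxx.
move=> a b c; rewrite !sgE.
case/orP => [/eqP -> // | /andP [/eqP -> /eqP ->]].
case/orP => [/eqP <- | /andP [/eqP e _]]; first by rewrite !eqxx orbT.
by move: uv; rewrite e eqxx.
Qed.

Lemma sg_noinc n (u v a b : 'I_n) : v < u -> a < b -> (a, b) \in sg u v -> False.
Proof.
move=> vu ab; rewrite sgE => /orP [/eqP e | /andP [/eqP e1 /eqP e2]].
  by move: ab; rewrite e ltnn.
by move: ab; rewrite e1 e2 => h; have := ltn_trans h vu; rewrite ltnn.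
Qed.

Lemma part2 n : 3 <= n -> ~ is_sublattice (@trans_int_rel n) (@is_int_rel n).
Proof.
move=> h [_ H].
have h0 : 0 < n by lia.
have h1 : 1 < n by lia.
have h2 : 2 < n by lia.
pose a0 := Ordinal h0; pose a1 := Ordinal h1; pose a2 := Ordinal h2.
have n21 : a2 != a1 by rewrite -val_eqE.
have n10 : a1 != a0 by rewrite -val_eqE.
have l21 : a1 < a2 by [].
have l10 : a0 < a1 by [].
pose R := sg a2 a1; pose S := sg a1 a0.
have tR := sg_trans n21; have tS := sg_trans n10.
have HJ : is_join (@is_int_rel n) R S (R :|: S).
  split; first by move=> i; rewrite inE tR.1.
  split; [split => a b ab | split; [split => a b ab | ]].
  - rewrite inE => /orP [// | hS]; by case: (sg_noinc l10 ab hS).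
  - by move=> hh; rewrite inE hh.
  - rewrite inE => /orP [hR | //]; by case: (sg_noinc l21 ab hR).
  - by move=> hh; rewrite inE hh orbT.
  - move=> U iU [hR1 hR2] [hS1 hS2]; split => a b ab.
      by move=> hU; rewrite inE (hR1 _ _ ab hU).
    by rewrite inE => /orP [hh | hh]; [apply: hR2 | apply: hS2].
have tJ := (H R S tR tS).1 _ HJ.
have := tJ.2 a2 a1 a0.
rewrite !inE !xpair_eqE !eqxx /= => /(_ isT isT).
by [].
Qed.

Theorem mainTheorem5 (n : nat) (hn : 1 <= n) :
  is_lattice (@trans_int_rel n) /\
  (3 <= n -> ~ is_sublattice (@trans_int_rel n) (@is_int_rel n)) /\
  is_sublattice (@int_poset n) (@trans_int_rel n).
Proof.
split; [|split].
- move=> R S hR hS; split; [exists (Jt R S); exact: Jt_join | exists (Mt R S); exact: Mt_meet].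
- exact: part2.
- split; first by move=> R [i [_ t]].
  move=> R S [iR [aR tR]] [iS [aS tS]]; split.
    move=> J HJ; rewrite (join_unique HJ (Jt_join (conj iR tR) (conj iS tS))).
    have [i t] := (Jt_join (conj iR tR) (conj iS tS)).1.
    split; [exact: i | split; [|exact: t]].
    by apply: rv_antisym; apply: Mt_antisym; apply: rv_antisym.
  move=> M HM; rewrite (meet_unique HM (Mt_meet (conj iR tR) (conj iS tS))).
  have [i t] := (Mt_meet (conj iR tR) (conj iS tS)).1.
  by split; [exact: i | split; [exact: Mt_antisym | exact: t]].
Qed.
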